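(* Let $c\ge 2$ be an integer and $\mathcal{P}$ a finite bias distribution. Consider a single code position: a value $p$ is drawn from $\mathcal{P}$; $\ell$ pirates ($2\le\ell\le c$) receive bits $b_1,\dots,b_\ell\in\{0,1\}$ that are, given $p$, independent with $\Pr(b_i=1)=p$; the pirates output $y\in\{0,1,?\}$ via a (possibly randomized) strategy depending only on $(b_1,\dots,b_\ell)$ (so that, given the bits, $y$ is independent of $p$) and satisfying: if $b_1=\dots=b_\ell$ then $y=b_1$. For $I\subset\{1,\dots,\ell\}$ with $x:=|I|$, $1\le x\le\ell-1$, let $\mathcal{B}_I$ be the event that $b_i=1$ exactly for $i\in I$, and $\mathcal{B}'_I=\mathcal{B}_I\wedge(y=1)$. Then the following are equivalent: (a) for every $2\le\ell\le c$, every such $I$, and every strategy with $\Pr(\mathcal{B}'_I)>0$, the conditional expectation $$\sum_{p}\Pr(p\mid\mathcal{B}'_I)\bigl(x\sigma(p)-(\ell-x)\sigma(1-p)\bigr)$$ (sum over the possible outputs $p$ of $\mathcal{P}$) equals $0$; (b) $\mathcal{P}$ is $c$-indistinguishable.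
   Context: A finite bias distribution is a probability distribution $\mathcal{P}$ supported on a finite subset of $(0,1)$ that is symmetric: it outputs $a$ and $1-a$ with the same probability. $E_p$ is expectation over $p\sim\mathcal{P}$. $\sigma(p)=\sqrt{(1-p)/p}$; for integers $\ell\ge1$, $0\le x\le\ell$, $f_{\ell,x}(p)=p^x(1-p)^{\ell-x}(x\sigma(p)-(\ell-x)\sigma(1-p))$ and $R_{\ell,x}=\max\{0,E_p[f_{\ell,x}(p)]\}$. $\mathcal{P}$ is $c$-indistinguishable if $\sum_{x=1}^{\ell-1}\binom{\ell}{x}R_{\ell,x}=0$ for all $2\le\ell\le c$. *)

(* Defs.v *)
From HB Require Import structures.
From mathcomp Require Import all_boot all_order all_algebra.
From mathcomp Require Import reals.
Set Implicit Arguments. Unset Strict Implicit. Unset Printing Implicit Defensive.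
Import Order.TTheory GRing.Theory Num.Theory.
Local Open Scope ring_scope.

Section Defs.
Variable R : realType.

(* A finite bias distribution is given by its (duplicate-free) support s
   together with the probability weights w; expectation over p ~ P is
   \sum_(a <- s) w a * f a. *)
Definition is_bias_dist (s : seq R) (w : R -> R) : Prop :=
  [/\ uniq s,
      (forall a, a \in s -> 0 < a < 1),
      (forall a, a \in s -> 0 < w a),
      \sum_(a <- s) w a = 1 &
      (forall a, a \in s -> (1 - a) \in s /\ w (1 - a) = w a)].

Definition Ep (s : seq R) (w : R -> R) (f : R -> R) : R :=
  \sum_(a <- s) w a * f a.

Definition sigma (p : R) : R := Num.sqrt ((1 - p) / p).

Definition f_lx (l x : nat) (p : R) : R :=
  p ^+ x * (1 - p) ^+ (l - x) *
  (x%:R * sigma p - (l - x)%:R * sigma (1 - p)).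

Definition R_lx (s : seq R) (w : R -> R) (l x : nat) : R :=
  Num.max 0 (Ep s w (f_lx l x)).

Definition c_indistinguishable (s : seq R) (w : R -> R) (c : nat) : Prop :=
  forall l : nat, (2 <= l <= c)%N ->
    \sum_(1 <= x < l) 'C(l, x)%:R * R_lx s w l x = 0.

(* Pirate strategy for l pirates: r b y = probability of outputting y
   (Some true = 1, Some false = 0, None = ?) given the received bits b. *)
Definition valid_strategy (l : nat)
    (r : {ffun 'I_l -> bool} -> option bool -> R) : Prop :=
  [/\ (forall b y, 0 <= r b y),
      (forall b, \sum_(y : option bool) r b y = 1) &
      (forall (b : {ffun 'I_l -> bool}) (v : bool), (forall i, b i = v) -> r b (Some v) = 1)].

Definition bits_prob (l : nat) (p : R) (b : {ffun 'I_l -> bool}) : R :=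
  \prod_(i < l) (if b i then p else 1 - p).

Definition bits_of (l : nat) (I : {set 'I_l}) : {ffun 'I_l -> bool} :=
  [ffun i => i \in I].

Definition joint_B' (w : R -> R) (l : nat) (I : {set 'I_l})
    (r : {ffun 'I_l -> bool} -> option bool -> R) (a : R) : R :=
  w a * bits_prob a (bits_of I) * r (bits_of I) (Some true).

Definition prob_B' (s : seq R) (w : R -> R) (l : nat) (I : {set 'I_l})
    (r : {ffun 'I_l -> bool} -> option bool -> R) : R :=
  \sum_(a <- s) joint_B' w I r a.

Definition cond_exp (s : seq R) (w : R -> R) (l : nat) (I : {set 'I_l})
    (r : {ffun 'I_l -> bool} -> option bool -> R) : R :=
  \sum_(a <- s) (joint_B' w I r a / prob_B' s w I r) *
     ((#|I|)%:R * sigma a - (l - #|I|)%:R * sigma (1 - a)).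

End Defs.

(* Main.v *)
Require Import Defs.
From HB Require Import structures.
From mathcomp Require Import all_boot all_order all_algebra.
From mathcomp Require Import reals.
From mathcomp Require Import ring lra zify.
Import Order.TTheory GRing.Theory Num.Theory.
Local Open Scope ring_scope.

Section Aux.
Variable R : realType.

Lemma Ep_sym (s : seq R) (w : R -> R) (F : R -> R) :
  is_bias_dist s w -> Ep s w F = Ep s w (fun a => F (1 - a)).
Proof.
case=> us _ _ _ hs.
have inj : injective (fun a : R => 1 - a) by move=> x y /= h; lra.
have pe : perm_eq s (map (fun a => 1 - a) s).
  apply: uniq_perm => //; first by rewrite map_inj_uniq.
  move=> x; apply/idP/idP => hx.
    apply/mapP; exists (1 - x); first by case: (hs x hx).
    by rewrite opprB addrC subrK.
  by case/mapP: hx => y /hs [h _] ->.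
rewrite /Ep (perm_big _ pe) /= big_map big_seq [RHS]big_seq.
apply: eq_bigr => a ha; by case: (hs a ha) => _ ->.
Qed.

Lemma f_sym (l x : nat) (a : R) : (x <= l)%N ->
  f_lx l (l - x) (1 - a) = - f_lx l x a.
Proof.
move=> hx; rewrite /f_lx subKn // (_ : 1 - (1 - a) = a); last by ring.
ring.
Qed.

Lemma Ep_opp (s : seq R) w F : Ep s w (fun a => - F a) = - Ep s w F.
Proof. by rewrite /Ep -sumrN; apply: eq_bigr => a _; rewrite mulrN. Qed.

Lemma Ep_f_sym (s : seq R) w l x : is_bias_dist s w -> (x <= l)%N ->
  Ep s w (f_lx l (l - x)) = - Ep s w (f_lx l x).
Proof.
move=> hb hx; rewrite (@Ep_sym _ _ _ hb) -Ep_opp /Ep.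
by apply: eq_bigr => a _; rewrite f_sym.
Qed.

Lemma bits_probE l (I : {set 'I_l}) (a : R) :
  bits_prob a (bits_of I) = a ^+ #|I| * (1 - a) ^+ (l - #|I|).
Proof.
rewrite /bits_prob (bigID (mem I)) /=.
rewrite (eq_bigr (fun _ => a)); last by move=> i hi; rewrite /bits_of ffunE hi.
rewrite [X in _ * X](eq_bigr (fun _ => 1 - a)); last first.
  by move=> i hi; rewrite /bits_of ffunE (negbTE hi).
rewrite !prodr_const; congr (_ * _ ^+ _).
have -> : (l - #|I| = #|~: I|)%N by rewrite -{1}(card_ord l) -(cardsC I) addKn.
by apply: eq_card => i; rewrite !inE.
Qed.

Lemma cond_expE (s : seq R) w l (I : {set 'I_l}) r :
  cond_exp s w I r = r (bits_of I) (Some true) / prob_B' s w I r * Ep s w (f_lx l #|I|).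
Proof.
rewrite /cond_exp /Ep mulr_sumr; apply: eq_bigr => a _.
rewrite /joint_B' bits_probE /f_lx; ring.
Qed.

End Aux.

Theorem proposition1 (R : realType) (c : nat) (s : seq R) (w : R -> R) :
  (2 <= c)%N -> is_bias_dist s w ->
  ((forall (l : nat), (2 <= l <= c)%N ->
     forall I : {set 'I_l}, (1 <= #|I| <= l - 1)%N ->
     forall r : {ffun 'I_l -> bool} -> option bool -> R,
       valid_strategy r -> 0 < prob_B' s w I r -> cond_exp s w I r = 0)
   <-> c_indistinguishable s w c).
Proof.
move=> hc hb; split.
- move=> ha; move=> l /andP[l2 lc].
  have key : forall x, (1 <= x <= l - 1)%N -> Ep s w (f_lx l x) = 0.
    move=> x /andP[x1 xl].
    have xl' : (x <= l)%N by lia.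
    pose I := [set widen_ord xl' i | i : 'I_x].
    have cI : #|I| = x by rewrite card_imset ?card_ord //; by move=> i j /(congr1 val) /= /val_inj.
    pose r := fun (b : {ffun 'I_l -> bool}) (y : option bool) =>
      (if [forall i, ~~ b i] then (y == Some false)%:R else (y == Some true)%:R : R).
    have s1 : forall c0 : option bool, \sum_(y : option bool) ((y == c0)%:R : R) = 1.
      move=> c0; rewrite (bigD1 c0) //= eqxx big1 ?addr0 // => y /negbTE -> //.
    have vr : valid_strategy r.
      split.
      + by move=> b y; rewrite /r; case: ifP => _; apply: ler0n.
      + by move=> b; rewrite /r; case: [forall i, ~~ b i]; apply: s1.
      + move=> b v hv; rewrite /r; case: v hv => hv.
          have i0 : 'I_l by exists 0%N; lia.
          have -> : [forall i, ~~ b i] = false.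
            by apply/negbTE/negP => /forallP /(_ i0); rewrite hv.
          by rewrite eqxx.
        have -> : [forall i, ~~ b i] = true by apply/forallP => i; rewrite hv.
        by rewrite eqxx.
    have hI : ~~ [forall i, ~~ bits_of I i].
      apply/negP => /forallP /(_ (widen_ord xl' (Ordinal x1))).
      by rewrite /bits_of ffunE imset_f.
    have rI : r (bits_of I) (Some true) = 1 by rewrite /r (negbTE hI) eqxx.
    have hs := hb; case: hs => _ hs01 hw hsum _.
    have jp : forall a, a \in s -> 0 < joint_B' w I r a.
      move=> a hain; rewrite /joint_B' rI mulr1 bits_probE.
      have := hs01 a hain => /andP[a0 a1].
      apply: mulr_gt0; first exact: hw.
      by apply: mulr_gt0; apply: exprn_gt0; lra.
    have pP : 0 < prob_B' s w I r.
      have [a0 ha0] : exists a0, a0 \in s.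
        move: hsum; case: (s) => [|a0 s'].
          by rewrite big_nil => /eqP; rewrite eq_sym oner_eq0.
        by move=> _; exists a0; exact: mem_head.
      have us : uniq s by case: hb.
      rewrite /prob_B' (bigD1_seq a0 ha0 us) /=.
      have h0 := jp a0 ha0.
      have h1 : 0 <= \sum_(j <- s | j != a0) joint_B' w I r j.
        rewrite big_seq_cond; apply: sumr_ge0 => a /andP[hain _]; apply: ltW; exact: jp.
      lra.
    have hIr : (1 <= #|I| <= l - 1)%N by rewrite cI x1 xl.
    have := ha l (introT andP (conj l2 lc)) I hIr r vr pP.
    rewrite cond_expE rI cI => /eqP; rewrite mulf_eq0 => /orP[|/eqP //].
    by rewrite mul1r invr_eq0 (gt_eqF pP).
  rewrite big_nat; apply: big1 => x hx.
  rewrite /R_lx key ?maxxx ?mulr0 //; lia.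
- move=> hi l /andP[l2 lc] I /andP[x1 xl] r _ _.
  rewrite cond_expE.
  suff -> : Ep s w (f_lx l #|I|) = 0 by rewrite mulr0.
  have le0 : forall x, (1 <= x <= l - 1)%N -> Ep s w (f_lx l x) <= 0.
    move=> x hx.
    have := hi l (introT andP (conj l2 lc)); rewrite big_nat => /eqP.
    rewrite psumr_eq0; last first.
      move=> i _; apply: mulr_ge0; first exact: ler0n.
      by rewrite /R_lx le_max lexx.
    move=> /allP /(_ x); rewrite mem_index_iota.
    have hx' : (1 <= x < l)%N by lia.
    move=> /(_ hx'); rewrite hx' /= mulf_eq0 pnatr_eq0 => /orP[|/eqP h].
      by rewrite eqn0Ngt bin_gt0; lia.
    have : Ep s w (f_lx l x) <= Num.max 0 (Ep s w (f_lx l x)) by rewrite le_max lexx orbT.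
    by rewrite -/(R_lx s w l x) h.
  have h1 := le0 _ (introT andP (conj x1 xl)).
  have h2 : Ep s w (f_lx l (l - #|I|)) <= 0 by apply: le0; lia.
  rewrite Ep_f_sym // in h2; last by lia.
  lra.
Qed.
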